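(* $\mathsf{C}_{\mathbb{N}^\mathbb{N}} \equiv_{\mathrm{sW}} \mathsf{FindHS}_{\boldsymbol{\Delta}^0_1} \equiv_{\mathrm{sW}} \mathsf{FindHS}_{\boldsymbol{\Pi}^0_1}$.
   Context: Strong Weihrauch reducibility: $f\le_{\mathrm{sW}} g$ iff there are computable $\Phi,\Psi:\subseteq\mathbb{N}^\mathbb{N}\to\mathbb{N}^\mathbb{N}$ such that for every realizer $G$ of $g$, $\Psi\circ G\circ\Phi$ realizes $f$; $\equiv_{\mathrm{sW}}$ is reducibility both ways. The Ramsey space $[\mathbb{N}]^\mathbb{N}$ is the set of strictly increasing functions $\mathbb{N}\to\mathbb{N}$ with the Baire-space topology; $fg=f\circ g$. For $P\subseteq[\mathbb{N}]^\mathbb{N}$, $f$ is homogeneous for $P$ if either $fg\in P$ for all $g\in[\mathbb{N}]^\mathbb{N}$ ($f$ lands in $P$) or $fg\notin P$ for all $g$ ($f$ avoids $P$); $\mathrm{HS}(P)$ is the set of homogeneous solutions. A name for an open $P\subseteq[\mathbb{N}]^\mathbb{N}$ is an enumeration of a set of finite strictly increasing strings whose cones have union $P$; a name for a clopen set is a pair of names for it and its complement. $\mathsf{FindHS}_{\boldsymbol{\Pi}^0_1}$: input an open $P$ with $\mathrm{HS}(P)\setminus P\neq\emptyset$, output any element of $\mathrm{HS}(P)\setminus P$. $\mathsf{FindHS}_{\boldsymbol{\Delta}^0_1}$: input a clopen $D$ with $\mathrm{HS}(D)\cap D\ne\emptyset$, output any element of $\mathrm{HS}(D)\cap D$. $\mathsf{C}_{\mathbb{N}^\mathbb{N}}$: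 input a name (e.g. a tree $T$ on $\mathbb{N}$ with $[T]$ the set) of a nonempty closed subset of $\mathbb{N}^\mathbb{N}$, output any element of it. *)

(* Defs.v *)
From Stdlib Require Import Arith List.
Import ListNotations.

Definition pair (x y : nat) : nat := (x + y) * (x + y + 1) / 2 + y.

(* its inverse, defined by enumerating the diagonals *)
Fixpoint unpair (n : nat) : nat * nat :=
  match n with
  | 0 => (0, 0)
  | S m => let (x, y) := unpair m in
           match x with
           | 0 => (S y, 0)
           | S x' => (x', S y)
           end
  end.

Fixpoint code (s : list nat) : nat :=
  match s with
  | [] => 0
  | x :: s' => S (pair x (code s'))
  end.

Definition pref (p : nat -> nat) (n : nat) : list nat := map p (seq 0 n).

Inductive rcode : Type :=
| rZero : rcode
| rSucc : rcode
| rId : rcode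
| rFst : rcode
| rSnd : rcode
| rComp : rcode -> rcode -> rcode
| rPair : rcode -> rcode -> rcode
| rPrim : rcode -> rcode -> rcode
| rMu : rcode -> rcode.

Inductive ev : rcode -> nat -> nat -> Prop :=
| evZero x : ev rZero x 0
| evSucc x : ev rSucc x (S x)
| evId x : ev rId x x
| evFst x : ev rFst x (fst (unpair x))
| evSnd x : ev rSnd x (snd (unpair x))
| evComp f g x y z : ev g x y -> ev f y z -> ev (rComp f g) x z
| evPair f g x y z : ev f x y -> ev g x z -> ev (rPair f g) x (pair y z)
| evPrim0 f g a z : ev f a z -> ev (rPrim f g) (pair a 0) z
| evPrimS f g a n y z :
    ev (rPrim f g) (pair a n) y -> ev g (pair a (pair n y)) z ->
    ev (rPrim f g) (pair a (S n)) z
| evMu f x n :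
    ev f (pair x n) 0 ->
    (forall m, m < n -> exists k, ev f (pair x m) (S k)) ->
    ev (rMu f) x n.

Definition computable (h : nat -> nat) : Prop :=
  exists c : rcode, forall x, ev c x (h x).

(* The partial functional coded by h maps p to q: after reading the
   prefix p|n, h answers the i-th output digit as (S v) or "not yet" (0);
   every digit is eventually answered, and all answers are correct. *)
Definition computes (h : nat -> nat) (p q : nat -> nat) : Prop :=
  forall i,
    (exists n, h (pair (code (pref p n)) i) = S (q i)) /\
    (forall n v, h (pair (code (pref p n)) i) = S v -> v = q i).

(* a problem is a relation between names of inputs and names of outputs;
   its domain is the set of names having some solution *)
Definition problem := (nat -> nat) -> (nat -> nat) -> Prop.

Definition realizer (g : problem) (G : (nat -> nat) -> (nat -> nat)) : Prop :=
  forall p, (exists q, g p q) -> g p (G p).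

Definition sW_le (f g : problem) : Prop :=
  exists hPhi hPsi : nat -> nat,
    computable hPhi /\ computable hPsi /\
    forall G, realizer g G ->
      forall p, (exists y, f p y) ->
        exists q r, computes hPhi p q /\ computes hPsi (G q) r /\ f p r.

Definition sW_eq (f g : problem) : Prop := sW_le f g /\ sW_le g f.

Definition in_tree (p : nat -> nat) (s : list nat) : Prop := p (code s) = 1.

Definition is_tree_name (p : nat -> nat) : Prop :=
  (forall s, p (code s) = 0 \/ p (code s) = 1) /\
  (forall s t, in_tree p (s ++ t) -> in_tree p s).

Definition body (p : nat -> nat) (f : nat -> nat) : Prop :=
  forall n, in_tree p (pref f n).

Definition C_Baire : problem := fun p q => is_tree_name p /\ body p q.

Definition strinc (f : nat -> nat) : Prop := forall n, f n < f (S n).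

Definition strinc_list (s : list nat) : Prop :=
  forall i, S i < length s -> nth i s 0 < nth (S i) s 0.

(* names of open subsets of [N]^N : enumerations, p n = S (code s) means
   s is enumerated, p n = 0 means nothing is enumerated at stage n *)
Definition enumerated (p : nat -> nat) (s : list nat) : Prop :=
  exists n, p n = S (code s).

Definition open_name (p : nat -> nat) : Prop :=
  forall s, enumerated p s -> strinc_list s.

Definition in_open (p : nat -> nat) (f : nat -> nat) : Prop :=
  strinc f /\ exists s, enumerated p s /\ pref f (length s) = s.

Definition lands (P : (nat -> nat) -> Prop) (f : nat -> nat) : Prop :=
  forall g, strinc g -> P (fun n => f (g n)).
Definition avoids (P : (nat -> nat) -> Prop) (f : nat -> nat) : Prop :=
  forall g, strinc g -> ~ P (fun n => f (g n)).
Definition HS (P : (nat -> nat) -> Prop) (f : nat -> nat) : Prop :=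
  strinc f /\ (lands P f \/ avoids P f).

Definition FindHS_Pi01 : problem :=
  fun p q => open_name p /\ HS (in_open p) q /\ ~ in_open p q.

(* names of clopen sets: pairs <p1,p2> (interleaving) of open names of
   the set and of its complement in [N]^N *)
Definition pi1 (p : nat -> nat) : nat -> nat := fun n => p (2 * n).
Definition pi2 (p : nat -> nat) : nat -> nat := fun n => p (2 * n + 1).

Definition clopen_name (p : nat -> nat) : Prop :=
  open_name (pi1 p) /\ open_name (pi2 p) /\
  forall f, strinc f -> (in_open (pi1 p) f <-> ~ in_open (pi2 p) f).

Definition FindHS_Delta01 : problem :=
  fun p q => clopen_name p /\ HS (in_open (pi1 p)) q /\ in_open (pi1 p) q.

(* Main.v *)
Require Import Defs.
From Stdlib Require Import Arith List Lia Bool.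
Import ListNotations.

Definition P1 (x : nat) : nat := fst (unpair x).
Definition P2 (x : nat) : nat := snd (unpair x).

Lemma tri_S k : (S k) * (S k + 1) / 2 = k * (k + 1) / 2 + S k.
Proof.
  replace (S k * (S k + 1)) with (k * (k + 1) + S k * 2) by nia.
  rewrite Nat.div_add by lia. reflexivity.
Qed.

Lemma pair_unpair n : pair (fst (unpair n)) (snd (unpair n)) = n.
Proof.
  induction n as [|m IH]; [reflexivity|].
  simpl. destruct (unpair m) as [x y] eqn:E. simpl in IH.
  destruct x as [|x'].
  - simpl. unfold pair in *. rewrite !Nat.add_0_r in *.
    pose proof (tri_S y) as T. simpl plus in *. lia.
  - simpl. unfold pair in *. replace (x' + S y) with (S x' + y) by lia. lia.
Qed.

Lemma unpair_surj x y : exists n, unpair n = (x, y).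
Proof.
  revert x y.
  assert (H : forall k y x, x + y = k -> exists n, unpair n = (x, y)).
  { induction k as [|k IHk]; intros y.
    - intros x Hxy. assert (x = 0) by lia. assert (y = 0) by lia. subst. exists 0. reflexivity.
    - induction y as [|y IHy]; intros x Hxy.
      + destruct (IHk k 0 ltac:(lia)) as [n Hn]. exists (S n). simpl. rewrite Hn.
        f_equal. lia.
      + destruct (IHy (S x) ltac:(lia)) as [n Hn]. exists (S n). simpl. rewrite Hn. reflexivity. }
  intros x y. apply (H (x + y) y x). reflexivity.
Qed.

Lemma unpair_pair x y : unpair (pair x y) = (x, y).
Proof.
  destruct (unpair_surj x y) as [n Hn].
  pose proof (pair_unpair n) as E. rewrite Hn in E. simpl in E. rewrite E. exact Hn.
Qed.

Lemma P1_pair x y : P1 (pair x y) = x.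
Proof. unfold P1. rewrite unpair_pair. reflexivity. Qed.
Lemma P2_pair x y : P2 (pair x y) = y.
Proof. unfold P2. rewrite unpair_pair. reflexivity. Qed.
Lemma pair_P n : pair (P1 n) (P2 n) = n.
Proof. apply pair_unpair. Qed.

Lemma pair_inj x y x' y' : pair x y = pair x' y' -> x = x' /\ y = y'.
Proof.
  intro H. pose proof (unpair_pair x y) as A. rewrite H, unpair_pair in A.
  inversion A. auto.
Qed.

Lemma pair_ge_r x y : y <= pair x y.
Proof. unfold pair. lia. Qed.

Lemma pair_ge_l x y : x <= pair x y.
Proof.
  unfold pair. set (k := x + y).
  assert (k <= k * (k + 1) / 2).
  { assert (k * 2 <= k * (k + 1)) by nia.
    apply Nat.div_le_mono with (c := 2) in H; [|lia].
    rewrite Nat.div_mul in H by lia. exact H. }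
  lia.
Qed.

Lemma pair_lt_S x y : pair x y < pair x (S y).
Proof.
  unfold pair.
  assert ((x + y) * (x + y + 1) / 2 <= (x + S y) * (x + S y + 1) / 2).
  { apply Nat.div_le_mono; nia. }
  lia.
Qed.

Lemma pair_mono_r x y y' : y < y' -> pair x y < pair x y'.
Proof.
  induction 1. apply pair_lt_S. pose proof (pair_lt_S x m). lia.
Qed.

Lemma P2_le n : P2 n <= n.
Proof. rewrite <- (pair_P n) at 2. apply pair_ge_r. Qed.
Lemma P1_le n : P1 n <= n.
Proof. rewrite <- (pair_P n) at 2. apply pair_ge_l. Qed.

Fixpoint iter_rec (b : nat) (s : nat -> nat -> nat) (n : nat) : nat :=
  match n with 0 => b | S n' => s n' (iter_rec b s n') end.

Definition computableb (f : nat -> bool) : Prop :=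
  computable (fun x => if f x then 1 else 0).

Lemma c_ext f g : (forall x, f x = g x) -> computable f -> computable g.
Proof. intros H [c Hc]. exists c. intro x. rewrite <- H. apply Hc. Qed.

Lemma c_id : computable (fun x => x).
Proof. exists rId. intro. constructor. Qed.

Lemma c_zero : computable (fun _ => 0).
Proof. exists rZero. intro. constructor. Qed.

Lemma c_S f : computable f -> computable (fun x => S (f x)).
Proof. intros [c Hc]. exists (rComp rSucc c). intro x. econstructor. apply Hc. constructor. Qed.

Lemma c_const n : computable (fun _ => n).
Proof. induction n. apply c_zero. apply (c_S (fun _ => n)). exact IHn. Qed.

Lemma c_P1 f : computable f -> computable (fun x => P1 (f x)).
Proof. intros [c Hc]. exists (rComp rFst c). intro x. econstructor. apply Hc. constructor. Qed.

Lemma c_P2 f : computable f -> computable (fun x => P2 (f x)).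
Proof. intros [c Hc]. exists (rComp rSnd c). intro x. econstructor. apply Hc. constructor. Qed.

Lemma c_pair f g : computable f -> computable g -> computable (fun x => pair (f x) (g x)).
Proof. intros [c Hc] [d Hd]. exists (rPair c d). intro x. constructor; auto. Qed.

Lemma c_comp f g : computable f -> computable g -> computable (fun x => f (g x)).
Proof. intros [c Hc] [d Hd]. exists (rComp c d). intro x. econstructor; eauto. Qed.

Lemma c_rec (b k : nat -> nat) (s : nat -> nat -> nat -> nat) :
  computable b -> computable (fun z => s (P1 z) (P1 (P2 z)) (P2 (P2 z))) -> computable k ->
  computable (fun x => iter_rec (b x) (s x) (k x)).
Proof.
  intros [cb Hb] [cs Hs] [ck Hk].
  exists (rComp (rPrim cb cs) (rPair rId ck)). intro x.
  econstructor. constructor. constructor. apply Hk.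
  generalize (k x). intro n. induction n.
  - constructor. apply Hb.
  - simpl. econstructor. apply IHn.
    specialize (Hs (pair x (pair n (iter_rec (b x) (s x) n)))).
    rewrite !P2_pair, !P1_pair in Hs. exact Hs.
Qed.

Lemma lift1 F f : computable F -> computable f -> computable (fun x => F (f x)).
Proof. apply c_comp. Qed.

Lemma lift2 (F : nat -> nat -> nat) f g : computable (fun z => F (P1 z) (P2 z)) ->
  computable f -> computable g -> computable (fun x => F (f x) (g x)).
Proof.
  intros HF Hf Hg. eapply c_ext; [|apply (c_comp _ _ HF (c_pair _ _ Hf Hg))].
  intro x. simpl. rewrite P1_pair, P2_pair. reflexivity.
Qed.

Lemma c_pred f : computable f -> computable (fun x => pred (f x)).
Proof.
  intro Hf. apply (lift1 (fun x => iter_rec 0 (fun n _ => n) x)) in Hf.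
  - eapply c_ext; [|exact Hf]. intro x. simpl. destruct (f x); reflexivity.
  - apply (c_rec (fun _ => 0) (fun x => x) (fun _ n _ => n)).
    apply c_zero. apply c_P1, c_P2, c_id. apply c_id.
Qed.

Lemma c_add f g : computable f -> computable g -> computable (fun x => f x + g x).
Proof.
  intros Hf Hg.
  eapply c_ext; [|apply (c_rec f g (fun _ _ y => S y)); auto].
  - intro x. simpl. generalize (g x). intro n. induction n; simpl; lia.
  - apply c_S, c_P2, c_P2, c_id.
Qed.

Lemma c_sub f g : computable f -> computable g -> computable (fun x => f x - g x).
Proof.
  intros Hf Hg.
  eapply c_ext; [|apply (c_rec f g (fun _ _ y => pred y)); auto].
  - intro x. simpl. generalize (g x). intro n. induction n; simpl; [lia|]. rewrite IHn. lia.
  - apply c_pred, c_P2, c_P2, c_id.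
Qed.

Lemma c_ifb (c : nat -> bool) a b : computableb c -> computable a -> computable b ->
  computable (fun x => if c x then a x else b x).
Proof.
  intros Hc Ha Hb.
  eapply c_ext; [|apply (c_rec b (fun x => if c x then 1 else 0) (fun x _ _ => a x)); auto].
  - intro x. simpl. destruct (c x); reflexivity.
  - apply (c_comp a P1); auto. apply c_P1, c_id.
Qed.

Lemma cb_ltb f g : computable f -> computable g -> computableb (fun x => f x <? g x).
Proof.
  intros Hf Hg. unfold computableb.
  eapply c_ext; [|apply c_sub; [apply (c_const 1)| apply c_sub; [apply c_S, Hf|apply Hg]]].
  intro x. cbv beta. destruct (Nat.ltb_spec (f x) (g x)); lia.
Qed.

Lemma cb_leb f g : computable f -> computable g -> computableb (fun x => f x <=? g x).
Proof.
  intros Hf Hg. unfold computableb.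
  eapply c_ext; [|apply c_sub; [apply (c_const 1)| apply c_sub; [apply Hf|apply Hg]]].
  intro x. cbv beta. destruct (Nat.leb_spec (f x) (g x)); lia.
Qed.

Lemma cb_eqb f g : computable f -> computable g -> computableb (fun x => f x =? g x).
Proof.
  intros Hf Hg. unfold computableb.
  eapply c_ext; [|apply c_sub; [apply (c_const 1)| apply (c_add (fun x => f x - g x) (fun x => g x - f x)); apply c_sub; auto]].
  intro x. cbv beta. destruct (Nat.eqb_spec (f x) (g x)); lia.
Qed.

Lemma cb_andb a b : computableb a -> computableb b -> computableb (fun x => a x && b x).
Proof.
  intros Ha Hb. unfold computableb.
  eapply c_ext; [|apply (c_ifb a (fun x => if b x then 1 else 0) (fun _ => 0)); auto using c_zero].
  intro x. cbv beta. destruct (a x); reflexivity.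
Qed.

Lemma cb_orb a b : computableb a -> computableb b -> computableb (fun x => a x || b x).
Proof.
  intros Ha Hb. unfold computableb.
  eapply c_ext; [|apply (c_ifb a (fun _ => 1) (fun x => if b x then 1 else 0)); auto using c_const].
  intro x. cbv beta. destruct (a x); reflexivity.
Qed.

Lemma cb_negb a : computableb a -> computableb (fun x => negb (a x)).
Proof.
  intros Ha. unfold computableb.
  eapply c_ext; [|apply c_sub; [apply (c_const 1)|apply Ha]].
  intro x. cbv beta. destruct (a x); reflexivity.
Qed.

Lemma cb_beq a b : computableb a -> computableb b -> computableb (fun x => Bool.eqb (a x) (b x)).
Proof.
  intros Ha Hb. unfold computableb.
  eapply c_ext; [|apply (c_ifb a (fun x => if b x then 1 else 0) (fun x => if negb (b x) then 1 else 0)); auto; apply cb_negb; auto].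
  intro x. cbv beta. destruct (a x), (b x); reflexivity.
Qed.

Lemma cb_const (v : bool) : computableb (fun _ => v).
Proof. unfold computableb. apply c_const. Qed.

Fixpoint fa_lt (q : nat -> bool) (n : nat) : bool :=
  match n with 0 => true | S n' => fa_lt q n' && q n' end.

Definition ex_lt (q : nat -> bool) (n : nat) : bool :=
  negb (fa_lt (fun i => negb (q i)) n).

Lemma fa_lt_spec q n : fa_lt q n = true <-> forall i, i < n -> q i = true.
Proof.
  induction n; simpl.
  - split; intros; [lia|reflexivity].
  - rewrite andb_true_iff, IHn. split.
    + intros [H1 H2] i Hi. destruct (Nat.eq_dec i n); [subst; auto|apply H1; lia].
    + intros H. split; auto.
Qed.

Lemma ex_lt_spec q n : ex_lt q n = true <-> exists i, i < n /\ q i = true.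
Proof.
  unfold ex_lt. rewrite negb_true_iff. split.
  - intro H. destruct (fa_lt (fun i => negb (q i)) n) eqn:E; [discriminate|].
    induction n; simpl in E; [discriminate|].
    apply andb_false_iff in E. destruct E as [E|E].
    + destruct (IHn E) as [i [Hi Hq]]. exists i. split; auto.
    + exists n. split; auto. destruct (q n); auto.
  - intros [i [Hi Hq]]. destruct (fa_lt (fun i => negb (q i)) n) eqn:E; auto.
    rewrite fa_lt_spec in E. specialize (E i Hi). rewrite Hq in E. discriminate.
Qed.

Lemma fa_lt_ext q q' n : (forall i, i < n -> q i = q' i) -> fa_lt q n = fa_lt q' n.
Proof.
  induction n; simpl; intros; auto. rewrite IHn, H; auto.
Qed.

Lemma cb_comp (B : nat -> bool) g : computableb B -> computable g -> computableb (fun x => B (g x)).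
Proof. intros HB Hg. unfold computableb in *. apply (c_comp (fun x => if B x then 1 else 0)); auto. Qed.

Lemma cb_forall (q : nat -> nat -> bool) k :
  computableb (fun z => q (P1 z) (P2 z)) -> computable k ->
  computableb (fun x => fa_lt (q x) (k x)).
Proof.
  intros Hq Hk. unfold computableb.
  eapply c_ext; [|apply (c_rec (fun _ => 1) k (fun x i acc => if q x i then acc else 0)); auto using c_const].
  - intro x. simpl. generalize (k x). intro n. induction n; simpl; auto.
    rewrite IHn. destruct (fa_lt (q x) n), (q x n); reflexivity.
  - apply (c_ifb (fun z => q (P1 z) (P1 (P2 z)))).
    + eapply c_ext; [|apply (cb_comp _ (fun z => pair (P1 z) (P1 (P2 z))) Hq)].
      * intro z. simpl. rewrite P1_pair, P2_pair. reflexivity.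
      * apply c_pair. apply c_P1, c_id. apply c_P1, c_P2, c_id.
    + apply c_P2, c_P2, c_id.
    + apply c_zero.
Qed.

Lemma cb_exists (q : nat -> nat -> bool) k :
  computableb (fun z => q (P1 z) (P2 z)) -> computable k ->
  computableb (fun x => ex_lt (q x) (k x)).
Proof.
  intros Hq Hk. unfold ex_lt. apply cb_negb.
  apply (cb_forall (fun x i => negb (q x i))); auto. apply cb_negb. exact Hq.
Qed.

Definition tlc (c : nat) : nat := P2 (pred c).
Definition hdc (c : nat) : nat := P1 (pred c).
Definition tlit (j c : nat) : nat := iter_rec c (fun _ y => tlc y) j.
Definition nthc (j c : nat) : nat := hdc (tlit j c).
Definition lenc (c : nat) : nat :=
  iter_rec 0 (fun j acc => if tlit j c =? 0 then acc else S acc) c.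
Definition par (x : nat) : nat := iter_rec 0 (fun _ y => 1 - y) x.
Definition half (x : nat) : nat := iter_rec 0 (fun n y => if par n =? 1 then S y else y) x.

Lemma c_tlc f : computable f -> computable (fun x => tlc (f x)).
Proof. intro. unfold tlc. apply c_P2, c_pred; auto. Qed.
Lemma c_hdc f : computable f -> computable (fun x => hdc (f x)).
Proof. intro. unfold hdc. apply c_P1, c_pred; auto. Qed.
Lemma c_tlit f g : computable f -> computable g -> computable (fun x => tlit (f x) (g x)).
Proof.
  intros. unfold tlit. apply (c_rec g f (fun _ _ y => tlc y)); auto.
  apply c_tlc, c_P2, c_P2, c_id.
Qed.
Lemma c_nthc f g : computable f -> computable g -> computable (fun x => nthc (f x) (g x)).
Proof. intros. unfold nthc. apply c_hdc, c_tlit; auto. Qed.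
Lemma c_lenc f : computable f -> computable (fun x => lenc (f x)).
Proof.
  intros. unfold lenc.
  apply (c_rec (fun _ => 0) f (fun x j acc => if tlit j (f x) =? 0 then acc else S acc)); auto using c_zero.
  apply c_ifb. apply cb_eqb. apply c_tlit. apply c_P1, c_P2, c_id. apply (c_comp f); auto. apply c_P1, c_id.
  apply c_zero. apply c_P2, c_P2, c_id. apply c_S, c_P2, c_P2, c_id.
Qed.
Lemma c_par f : computable f -> computable (fun x => par (f x)).
Proof.
  intros. unfold par. apply (c_rec (fun _ => 0) f (fun _ _ y => 1 - y)); auto using c_zero.
  apply c_sub. apply c_const. apply c_P2, c_P2, c_id.
Qed.
Lemma c_half f : computable f -> computable (fun x => half (f x)).
Proof.
  intros. unfold half. apply (c_rec (fun _ => 0) f (fun _ n y => if par n =? 1 then S y else y)); auto using c_zero.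
  apply c_ifb. apply cb_eqb. apply c_par, c_P1, c_P2, c_id. apply c_const.
  apply c_S, c_P2, c_P2, c_id. apply c_P2, c_P2, c_id.
Qed.

Ltac cstep :=
  cbv beta;
  lazymatch goal with
  | |- computableb _ =>
    first [ apply cb_const | apply cb_ltb | apply cb_leb | apply cb_eqb | apply cb_andb | apply cb_orb
          | apply cb_negb | apply cb_beq | apply cb_forall | apply cb_exists ]
  | |- computable _ =>
    first [ apply c_id | apply c_const
        | apply c_S | apply c_P1 | apply c_P2 | apply c_pair
        | apply c_pred | apply c_add | apply c_sub
        | apply c_ifb
        | apply c_tlc | apply c_hdc | apply c_tlit | apply c_nthc | apply c_lenc
        | apply c_par | apply c_half ]
  end.
Ltac crush := repeat cstep.

Lemma code_inj s t : code s = code t -> s = t.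
Proof.
  revert t; induction s as [|x s IH]; intros [|y t] H; simpl in H; try discriminate; auto.
  injection H as H. apply pair_inj in H as [-> H]. f_equal. auto.
Qed.

Lemma code_surj c : exists s, code s = c.
Proof.
  induction c as [c IH] using lt_wf_ind.
  destruct c as [|c']. exists []. reflexivity.
  destruct (IH (P2 c')) as [s Hs]. pose proof (P2_le c'). lia.
  exists (P1 c' :: s). simpl. rewrite Hs, pair_P. reflexivity.
Qed.

Lemma length_le_code s : length s <= code s.
Proof. induction s; simpl; auto. pose proof (pair_ge_r a (code s)). lia. Qed.

Lemma code_snoc s a : code s < code (s ++ [a]).
Proof.
  induction s; simpl. lia. apply -> Nat.succ_lt_mono. apply pair_mono_r. auto.
Qed.

Lemma tlc_code s : tlc (code s) = code (tl s).
Proof. destruct s; simpl; [reflexivity|]. unfold tlc. simpl. apply P2_pair. Qed.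
Lemma hdc_code s : hdc (code s) = hd 0 s.
Proof. destruct s; simpl; [reflexivity|]. unfold hdc. simpl. apply P1_pair. Qed.

Lemma tlit_S j c : tlit (S j) c = tlc (tlit j c).
Proof. reflexivity. Qed.

Lemma skipn_S_tl j (s : list nat) : skipn (S j) s = tl (skipn j s).
Proof. revert s; induction j; intros [|x s]; simpl; auto. rewrite <- IHj. destruct s; reflexivity. Qed.

Lemma tlit_code j s : tlit j (code s) = code (skipn j s).
Proof.
  induction j. reflexivity. rewrite tlit_S, IHj, tlc_code, skipn_S_tl. reflexivity.
Qed.

Lemma nth_hd_skipn j (s : list nat) : nth j s 0 = hd 0 (skipn j s).
Proof. revert s; induction j; intros [|x s]; simpl; auto. Qed.

Lemma nthc_code j s : nthc j (code s) = nth j s 0.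
Proof. unfold nthc. rewrite tlit_code, hdc_code, nth_hd_skipn. reflexivity. Qed.

Lemma lenc_code s : lenc (code s) = length s.
Proof.
  unfold lenc.
  assert (H : forall N, iter_rec 0 (fun j acc => if tlit j (code s) =? 0 then acc else S acc) N = Nat.min N (length s)).
  { induction N; [reflexivity|]. cbn [iter_rec]. rewrite IHN, tlit_code.
    destruct (Nat.lt_ge_cases N (length s)).
    - destruct (skipn N s) eqn:E.
      + apply (f_equal (@length nat)) in E. rewrite length_skipn in E. simpl in E. lia.
      + assert (Nat.min (S N) (length s) = S (Nat.min N (length s))) as -> by lia. reflexivity.
    - rewrite skipn_all2 by lia. assert (Nat.min (S N) (length s) = Nat.min N (length s)) as -> by lia. reflexivity. }
  rewrite H. pose proof (length_le_code s). lia.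
Qed.

Lemma lenc_le c : lenc c <= c.
Proof. destruct (code_surj c) as [s <-]. rewrite lenc_code. apply length_le_code. Qed.

Lemma pref_length p n : length (pref p n) = n.
Proof. unfold pref. rewrite length_map, length_seq. reflexivity. Qed.

Lemma nth_pref p n i d : i < n -> nth i (pref p n) d = p i.
Proof.
  intro H. unfold pref. rewrite nth_indep with (d' := p 0) by (rewrite length_map, length_seq; auto).
  rewrite map_nth, seq_nth by auto. reflexivity.
Qed.

Lemma lenc_pref p n : lenc (code (pref p n)) = n.
Proof. rewrite lenc_code. apply pref_length. Qed.

Lemma nthc_pref p n k : k < n -> nthc k (code (pref p n)) = p k.
Proof. intro. rewrite nthc_code. apply nth_pref; auto. Qed.

Lemma pref_S p n : pref p (S n) = pref p n ++ [p n].
Proof. unfold pref. rewrite seq_S, map_app. reflexivity. Qed.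

Lemma par_half n : par (n + n) = 0 /\ par (S (n + n)) = 1 /\ half (n + n) = n /\ half (S (n + n)) = n.
Proof.
  induction n as [|n [A [B [C D]]]]. repeat split; reflexivity.
  replace (S n + S n) with (S (S (n + n))) by lia.
  assert (E1 : par (S (S (n + n))) = 0). { change (1 - par (S (n + n)) = 0). rewrite B. reflexivity. }
  assert (E2 : par (S (S (S (n + n)))) = 1). { change (1 - par (S (S (n + n))) = 1). rewrite E1. reflexivity. }
  repeat split; auto.
  - change ((if par (S (n + n)) =? 1 then S (half (S (n + n))) else half (S (n + n))) = S n).
    rewrite B, D. reflexivity.
  - change ((if par (S (S (n + n))) =? 1 then S (half (S (S (n + n)))) else half (S (S (n + n)))) = S n).
    rewrite E1. simpl.
    change ((if par (S (n + n)) =? 1 then S (half (S (n + n))) else half (S (n + n))) = S n).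
    rewrite B, D. reflexivity.
Qed.

Lemma par_even n : par (2 * n) = 0.
Proof. replace (2 * n) with (n + n) by lia. apply par_half. Qed.
Lemma par_odd n : par (2 * n + 1) = 1.
Proof. replace (2 * n + 1) with (S (n + n)) by lia. apply par_half. Qed.
Lemma half_even n : half (2 * n) = n.
Proof. replace (2 * n) with (n + n) by lia. apply par_half. Qed.
Lemma half_odd n : half (2 * n + 1) = n.
Proof. replace (2 * n + 1) with (S (n + n)) by lia. apply par_half. Qed.

Lemma strinc_lt f : strinc f -> forall i j, i < j -> f i < f j.
Proof.
  intros H i j Hij. induction Hij. apply H. specialize (H m). lia.
Qed.
Lemma strinc_le f : strinc f -> forall i j, i <= j -> f i <= f j.
Proof.
  intros H i j Hij. destruct (Nat.eq_dec i j). subst; lia. pose proof (strinc_lt f H i j). lia.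
Qed.
Lemma strinc_comp f g : strinc f -> strinc g -> strinc (fun n => f (g n)).
Proof. intros Hf Hg n. apply strinc_lt; auto. Qed.

Lemma computes_gen (h : nat -> nat) p q (need : nat -> nat) (F : nat -> nat -> nat) :
  (forall c i, h (pair c i) = if need i <? lenc c then S (F c i) else 0) ->
  (forall n i, need i < n -> F (code (pref p n)) i = q i) ->
  computes h p q.
Proof.
  intros Hh HF i. split.
  - exists (S (need i)). rewrite Hh, lenc_pref. destruct (Nat.ltb_spec (need i) (S (need i))); [|lia].
    rewrite HF; auto.
  - intros n v. rewrite Hh, lenc_pref. destruct (Nat.ltb_spec (need i) n); [|discriminate].
    intro E. injection E as <-. apply HF; auto.
Qed.

Fixpoint dec (fuel c : nat) : list nat :=
  match fuel with 0 => [] | S fu => match c with 0 => [] | S c' => P1 c' :: dec fu (P2 c') end end.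
Definition decode (c : nat) : list nat := dec c c.

Lemma code_decode c : code (decode c) = c.
Proof.
  unfold decode. assert (H : forall fuel c, c <= fuel -> code (dec fuel c) = c).
  { induction fuel; intros [|c'] Hc; simpl; auto; try lia.
    rewrite IHfuel. rewrite pair_P; reflexivity. pose proof (P2_le c'). lia. }
  apply H. auto.
Qed.
Lemma decode_code s : decode (code s) = s.
Proof. apply code_inj. apply code_decode. Qed.

Definition prefc (a b : nat) : bool := fa_lt (fun j => nthc j a =? nthc j b) (lenc a).
Definition condT (T : nat -> bool) (a b : nat) : bool :=
  T a && T b && prefc a b && (lenc a <? lenc b).
Definition Dname (T : nat -> bool) (i : nat) : nat :=
  if (P1 (half i) <? P2 (half i)) && Bool.eqb (condT T (P1 (half i)) (P2 (half i))) (par i =? 0)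
  then S (S (pair (P1 (half i)) (S (pair (P2 (half i)) 0)))) else 0.

Lemma pi1_D T n : pi1 (Dname T) n =
  if (P1 n <? P2 n) && condT T (P1 n) (P2 n) then S (code [P1 n; P2 n]) else 0.
Proof.
  unfold pi1, Dname. rewrite half_even, par_even. simpl (0 =? 0).
  destruct (condT T (P1 n) (P2 n)), (P1 n <? P2 n); reflexivity.
Qed.

Lemma pi2_D T n : pi2 (Dname T) n =
  if (P1 n <? P2 n) && negb (condT T (P1 n) (P2 n)) then S (code [P1 n; P2 n]) else 0.
Proof.
  unfold pi2, Dname. rewrite half_odd, par_odd. simpl (1 =? 0).
  destruct (condT T (P1 n) (P2 n)), (P1 n <? P2 n); reflexivity.
Qed.

Lemma pairs_open (B : nat -> nat -> bool) p :
  (forall n, p n = if (P1 n <? P2 n) && B (P1 n) (P2 n) then S (code [P1 n; P2 n]) else 0) ->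
  open_name p /\ forall h, (in_open p h <-> strinc h /\ B (h 0) (h 1) = true).
Proof.
  intros Hp. split.
  - intros s [n Hn]. rewrite Hp in Hn.
    destruct (P1 n <? P2 n) eqn:E1; simpl in Hn; [|discriminate].
    destruct (B (P1 n) (P2 n)); [|discriminate].
    injection Hn as Hn. apply (code_inj [P1 n; P2 n] s) in Hn. subst s.
    apply Nat.ltb_lt in E1. intros i Hi. simpl in Hi. destruct i; [simpl; auto|lia].
  - intro h. split.
    + intros [Hs [s [[n Hn] Hpr]]]. split; auto. rewrite Hp in Hn.
      destruct (P1 n <? P2 n) eqn:E1; simpl in Hn; [|discriminate].
      destruct (B (P1 n) (P2 n)) eqn:E2; [|discriminate].
      injection Hn as Hn. apply (code_inj [P1 n; P2 n] s) in Hn. subst s.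
      simpl in Hpr. injection Hpr as H0 H1. rewrite H0, H1. exact E2.
    + intros [Hs HB]. split; auto. exists [h 0; h 1]. split; [|reflexivity].
      exists (pair (h 0) (h 1)). rewrite Hp, P1_pair, P2_pair.
      assert (h 0 <? h 1 = true) as -> by (apply Nat.ltb_lt; apply Hs).
      rewrite HB. reflexivity.
Qed.

Lemma D1_open T : open_name (pi1 (Dname T)) /\
  forall h, (in_open (pi1 (Dname T)) h <-> strinc h /\ condT T (h 0) (h 1) = true).
Proof. apply pairs_open. apply pi1_D. Qed.

Lemma D2_open T : open_name (pi2 (Dname T)) /\
  forall h, (in_open (pi2 (Dname T)) h <-> strinc h /\ negb (condT T (h 0) (h 1)) = true).
Proof. apply (pairs_open (fun a b => negb (condT T a b))). apply pi2_D. Qed.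

Lemma D_clopen T : clopen_name (Dname T).
Proof.
  destruct (D1_open T) as [O1 H1]. destruct (D2_open T) as [O2 H2].
  split; auto. split; auto. intros f Hf. rewrite H1, H2.
  destruct (condT T (f 0) (f 1)); simpl; intuition discriminate.
Qed.

Lemma Dname_ext T T' i : (forall x, x <= P2 (half i) -> T x = T' x) -> Dname T i = Dname T' i.
Proof.
  intro H. unfold Dname. destruct (P1 (half i) <? P2 (half i)) eqn:E; [|reflexivity].
  apply Nat.ltb_lt in E. unfold condT. rewrite (H (P1 (half i))), (H (P2 (half i))) by lia.
  reflexivity.
Qed.

Lemma prefc_code s t : prefc (code s) (code t) = true <->
  forall j, j < length s -> nth j s 0 = nth j t 0.
Proof.
  unfold prefc. rewrite fa_lt_spec, lenc_code. split; intros H j Hj; specialize (H j Hj).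
  - rewrite !nthc_code in H. apply Nat.eqb_eq. exact H.
  - rewrite !nthc_code. apply Nat.eqb_eq. exact H.
Qed.

Lemma D_path T x : (forall m, T (code (pref x m)) = true) ->
  HS (in_open (pi1 (Dname T))) (fun k => code (pref x k)) /\
  in_open (pi1 (Dname T)) (fun k => code (pref x k)).
Proof.
  intros HT. destruct (D1_open T) as [_ H1].
  assert (Hst : strinc (fun k => code (pref x k))).
  { intro n. cbv beta. rewrite pref_S. apply code_snoc. }
  assert (Hc : forall i j, i < j -> condT T (code (pref x i)) (code (pref x j)) = true).
  { intros i j Hij. unfold condT. rewrite !HT, !lenc_pref. simpl.
    apply andb_true_iff. split; [|apply Nat.ltb_lt; auto].
    apply prefc_code. rewrite pref_length. intros j' Hj'. rewrite !nth_pref by lia. reflexivity. }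
  split; [split; auto; left|].
  - intros g Hg. apply H1. split. apply (strinc_comp _ _ Hst Hg). apply Hc. apply Hg.
  - apply H1. split; auto.
Qed.

Lemma lands_of_sol P f : HS P f -> P f -> lands P f.
Proof. intros [_ [H|H]] Hp; auto. exfalso. apply (H (fun n => n)); auto. intro; lia. Qed.

Lemma D_sol T f : (forall s t, T (code (s ++ t)) = true -> T (code s) = true) ->
  strinc f -> lands (in_open (pi1 (Dname T))) f ->
  forall m, T (code (pref (fun n => nthc n (f (S n))) m)) = true.
Proof.
  intros Hcl Hf Hl. destruct (D1_open T) as [_ H1].
  assert (Hc : forall i j, i < j -> condT T (f i) (f j) = true).
  { intros i j Hij.
    set (g := fun n => match n with 0 => i | S n' => j + n' end).
    assert (Hg : strinc g). { intros [|n]; simpl; lia. }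
    destruct (proj1 (H1 _) (Hl g Hg)) as [_ Hcd]. simpl in Hcd. rewrite Nat.add_0_r in Hcd. exact Hcd. }
  set (s := fun k => decode (f k)).
  assert (Hfs : forall k, f k = code (s k)). { intro. unfold s. rewrite code_decode. auto. }
  assert (Hc2 : forall i j, i < j -> T (f i) = true /\ T (f j) = true /\
     (forall j', j' < length (s i) -> nth j' (s i) 0 = nth j' (s j) 0) /\ length (s i) < length (s j)).
  { intros i j Hij. specialize (Hc i j Hij). unfold condT in Hc.
    rewrite !andb_true_iff in Hc. destruct Hc as [[[A B] C] D].
    rewrite (Hfs i), (Hfs j) in C, D. rewrite prefc_code in C. rewrite !lenc_code in D.
    apply Nat.ltb_lt in D. auto. }
  assert (Hlen : forall k, k <= length (s k)).
  { induction k; [lia|]. destruct (Hc2 k (S k)) as [_ [_ [_ D]]]; lia. }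
  intro m.
  assert (Hpr : pref (fun n => nthc n (f (S n))) m = firstn m (s m)).
  { apply nth_ext with (d := 0) (d' := 0).
    - rewrite pref_length, length_firstn. specialize (Hlen m). lia.
    - intros n Hn. rewrite pref_length in Hn. rewrite nth_pref by auto.
      rewrite nth_firstn. assert (n <? m = true) as -> by (apply Nat.ltb_lt; auto).
      rewrite Hfs, nthc_code.
      destruct (Nat.eq_dec (S n) m). subst; reflexivity.
      destruct (Hc2 (S n) m ltac:(lia)) as [_ [_ [C _]]]. apply C. specialize (Hlen (S n)). lia. }
  rewrite Hpr. apply (Hcl _ (skipn m (s m))). rewrite firstn_skipn, <- Hfs.
  apply (Hc2 m (S m)). lia.
Qed.

Definition strincc (u : nat) : bool :=
  fa_lt (fun j => negb (S j <? lenc u) || (nthc j u <? nthc (S j) u)) (lenc u).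
Definition allinc (s u : nat) : bool :=
  fa_lt (fun j => ex_lt (fun k => nthc j s =? nthc k u) (lenc u)) (lenc s).
Definition TP (look : nat -> nat) (u : nat) : bool :=
  strincc u && fa_lt (fun k => (look k =? 0) || negb (allinc (pred (look k)) u)) (lenc u).

Definition allinL (s u : list nat) : Prop :=
  forall j, j < length s -> exists i, i < length u /\ nth j s 0 = nth i u 0.

Lemma strincc_spec u : strincc (code u) = true <-> strinc_list u.
Proof.
  unfold strincc, strinc_list. rewrite fa_lt_spec, lenc_code. split.
  - intros H i Hi. specialize (H i ltac:(lia)). rewrite orb_true_iff, negb_true_iff, !nthc_code in H.
    destruct H as [H|H]. apply Nat.ltb_nlt in H. lia. apply Nat.ltb_lt. auto.
  - intros H i Hi. rewrite orb_true_iff, negb_true_iff, !nthc_code.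
    destruct (Nat.ltb_spec (S i) (length u)). right. apply Nat.ltb_lt. auto. left. reflexivity.
Qed.

Lemma allinc_spec s u : allinc (code s) (code u) = true <-> allinL s u.
Proof.
  unfold allinc, allinL. rewrite fa_lt_spec, !lenc_code. split.
  - intros H j Hj. specialize (H j Hj). apply ex_lt_spec in H as [i [Hi E]].
    rewrite !nthc_code in E. apply Nat.eqb_eq in E. eauto.
  - intros H j Hj. apply ex_lt_spec. destruct (H j Hj) as [i [Hi E]]. exists i. split; auto.
    rewrite !nthc_code. apply Nat.eqb_eq. auto.
Qed.

Lemma TP_spec look u : TP look (code u) = true <->
  strinc_list u /\ forall k, k < length u -> forall s, look k = S (code s) -> ~ allinL s u.
Proof.
  unfold TP. rewrite andb_true_iff, strincc_spec, fa_lt_spec, lenc_code.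
  split; intros [A B]; split; auto.
  - intros k Hk s Hs Hin. specialize (B k Hk). rewrite Hs in B. simpl in B.
    apply allinc_spec in Hin. rewrite Hin in B. discriminate.
  - intros k Hk. destruct (look k) as [|v] eqn:E; [reflexivity|]. simpl.
    destruct (allinc v (code u)) eqn:E2; [|reflexivity]. exfalso.
    rewrite <- (code_decode v) in E, E2. apply allinc_spec in E2. apply (B k Hk _ E E2).
Qed.

Lemma TP_ext look look' u : (forall k, k < lenc u -> look k = look' k) -> TP look u = TP look' u.
Proof.
  intro H. unfold TP. f_equal. apply fa_lt_ext. intros k Hk. rewrite H; auto.
Qed.

Lemma TP_prefix look s t : TP look (code (s ++ t)) = true -> TP look (code s) = true.
Proof.
  rewrite !TP_spec. intros [A B]. split.
  - intros i Hi. specialize (A i ltac:(rewrite length_app; lia)). rewrite !app_nth1 in A by lia. auto.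
  - intros k Hk σ Hσ Hin. apply (B k ltac:(rewrite length_app; lia) σ Hσ).
    intros j Hj. destruct (Hin j Hj) as [i [Hi E]]. exists i. rewrite length_app, app_nth1 by lia.
    split; auto. lia.
Qed.

Lemma TP_path look f : (forall m, TP look (code (pref f m)) = true) ->
  strinc f /\ avoids (in_open look) f.
Proof.
  intro H. assert (Hf : strinc f).
  { intro n. destruct (proj1 (TP_spec _ _) (H (S (S n)))) as [A _].
    specialize (A n ltac:(rewrite pref_length; lia)). rewrite !nth_pref in A by lia. auto. }
  split; auto. intros g Hg [_ [s [[k Hk] Hpr]]].
  set (m := S (k + g (length s))).
  destruct (proj1 (TP_spec _ _) (H m)) as [_ B].
  apply (B k ltac:(rewrite pref_length; unfold m; lia) s Hk).
  intros j Hj. exists (g j). rewrite pref_length. split.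
  - pose proof (strinc_lt g Hg j (length s) Hj). unfold m. lia.
  - rewrite nth_pref. rewrite <- Hpr, nth_pref by auto. reflexivity.
    pose proof (strinc_lt g Hg j (length s) Hj). unfold m. lia.
Qed.

Fixpoint fi (f : nat -> nat) (x m : nat) : nat :=
  match m with 0 => 0 | S m' => if f m' =? x then m' else fi f x m' end.

Lemma fi_spec f x m : (exists i, i < m /\ f i = x) -> fi f x m < m /\ f (fi f x m) = x.
Proof.
  induction m; intros [i [Hi E]]; [lia|]. simpl.
  destruct (Nat.eqb_spec (f m) x). split; auto.
  destruct IHm as [A B]. exists i. split; auto. destruct (Nat.eq_dec i m); [subst; contradiction|lia].
  split; auto.
Qed.

Lemma TP_avoid look f : open_name look -> strinc f -> avoids (in_open look) f ->
  forall m, TP look (code (pref f m)) = true.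
Proof.
  intros Ho Hf Hav m. apply TP_spec. split.
  - intros i Hi. rewrite pref_length in Hi. rewrite !nth_pref by lia. apply Hf.
  - intros k Hk s Hs Hin.
    assert (Hss : strinc_list s) by (apply Ho; exists k; auto).
    assert (Hex : forall j, j < length s -> exists i, i < m /\ f i = nth j s 0).
    { intros j Hj. destruct (Hin j Hj) as [i [Hi E]]. rewrite pref_length in Hi.
      exists i. split; auto. rewrite E, nth_pref; auto. }
    set (g := fun n => if n <? length s then fi f (nth n s 0) m else m + n).
    assert (Hgs : forall n, n < length s -> g n < m /\ f (g n) = nth n s 0).
    { intros n Hn. unfold g. assert (n <? length s = true) as -> by (apply Nat.ltb_lt; auto).
      apply fi_spec. apply Hex; auto. }
    assert (Hg : strinc g).
    { intro n. destruct (Nat.lt_ge_cases (S n) (length s)).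
      - destruct (Hgs n ltac:(lia)) as [_ A]. destruct (Hgs (S n) H) as [_ B].
        specialize (Hss n H). rewrite <- A, <- B in Hss.
        destruct (Nat.lt_ge_cases (g n) (g (S n))); auto.
        pose proof (strinc_le f Hf _ _ H0). lia.
      - unfold g at 2. assert (S n <? length s = false) as -> by (apply Nat.ltb_nlt; lia).
        destruct (Nat.lt_ge_cases n (length s)).
        + destruct (Hgs n H0). lia.
        + unfold g. assert (n <? length s = false) as -> by (apply Nat.ltb_nlt; lia). lia. }
    apply (Hav g Hg). split. apply strinc_comp; auto.
    exists s. split. exists k; auto.
    apply nth_ext with (d := 0) (d' := 0). rewrite pref_length; auto.
    intros n Hn. rewrite pref_length in Hn. rewrite nth_pref by auto. apply Hgs; auto.
Qed.

Definition hC2D z := if P2 (half (P2 z)) <? lenc (P1 z)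
  then S (Dname (fun x => nthc x (P1 z) =? 1) (P2 z)) else 0.
Definition hP2D z := if P2 (half (P2 z)) <? lenc (P1 z)
  then S (Dname (fun x => TP (fun k => nthc k (P1 z)) x) (P2 z)) else 0.
Definition hD2C z := if P2 z + P2 z + 1 <? lenc (P1 z)
  then S (if TP (fun k => nthc (k + k + 1) (P1 z)) (P2 z) then 1 else 0) else 0.
Definition hID z := if P2 z <? lenc (P1 z) then S (nthc (P2 z) (P1 z)) else 0.
Definition hD2P z := if P2 z + P2 z + 1 <? lenc (P1 z) then S (nthc (P2 z + P2 z + 1) (P1 z)) else 0.
Definition hR z := if S (P2 z) <? lenc (P1 z) then S (nthc (P2 z) (nthc (S (P2 z)) (P1 z))) else 0.

Ltac unf := unfold hC2D, hP2D, hD2C, hID, hD2P, hR, Dname, condT, prefc, TP, strincc, allinc.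

Lemma comp_hC2D : computable hC2D. Proof. unf. crush. Qed.
Lemma comp_hP2D : computable hP2D. Proof. unf. crush. Qed.
Lemma comp_hD2C : computable hD2C. Proof. unf. crush. Qed.
Lemma comp_hID : computable hID. Proof. unf. crush. Qed.
Lemma comp_hD2P : computable hD2P. Proof. unf. crush. Qed.
Lemma comp_hR : computable hR. Proof. unf. crush. Qed.

Lemma h_spec (h : nat -> nat) need F :
  (forall z, h z = if need (P2 z) <? lenc (P1 z) then S (F (P1 z) (P2 z)) else 0) ->
  forall c i, h (pair c i) = if need i <? lenc c then S (F c i) else 0.
Proof. intros H c i. rewrite H, P1_pair, P2_pair. reflexivity. Qed.

Lemma computes_R f : computes hR f (fun n => nthc n (f (S n))).
Proof.
  apply (computes_gen hR f _ S (fun c i => nthc i (nthc (S i) c))).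
  apply h_spec. reflexivity.
  intros n i Hn. rewrite nthc_pref by lia. reflexivity.
Qed.

Lemma computes_ID f : computes hID f f.
Proof.
  apply (computes_gen hID f _ (fun i => i) (fun c i => nthc i c)).
  apply h_spec. reflexivity.
  intros n i Hn. rewrite nthc_pref by lia. reflexivity.
Qed.

Lemma clopen_avoid p y : clopen_name p -> strinc y -> lands (in_open (pi1 p)) y ->
  avoids (in_open (pi2 p)) y.
Proof.
  intros [_ [_ Heq]] Hy Hl g Hg H2. apply (proj1 (Heq _ (strinc_comp _ _ Hy Hg))); auto.
Qed.

Lemma clopen_lands p y : clopen_name p -> strinc y -> avoids (in_open (pi2 p)) y ->
  lands (in_open (pi1 p)) y.
Proof.
  intros [_ [_ Heq]] Hy Hav g Hg. apply (proj2 (Heq _ (strinc_comp _ _ Hy Hg))); auto.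
Qed.

Lemma id_strinc : strinc (fun n => n).
Proof. intro; lia. Qed.

Lemma red_C_D : sW_le C_Baire FindHS_Delta01.
Proof.
  exists hC2D, hR. split; [apply comp_hC2D|split; [apply comp_hR|]].
  intros G HG p [y [Htree Hbody]].
  set (T := fun x => p x =? 1).
  assert (HTy : forall m, T (code (pref y m)) = true).
  { intro m. unfold T. apply Nat.eqb_eq. apply Hbody. }
  assert (Hq : FindHS_Delta01 (Dname T) (fun k => code (pref y k))).
  { split. apply D_clopen. apply D_path; auto. }
  destruct (HG (Dname T) (ex_intro _ _ Hq)) as [Hcl [HHS Hin]].
  exists (Dname T), (fun n => nthc n (G (Dname T) (S n))).
  split; [|split; [apply computes_R|]].
  - apply (computes_gen hC2D p _ (fun i => P2 (half i)) (fun c i => Dname (fun x => nthc x c =? 1) i)).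
    apply h_spec. reflexivity.
    intros n i Hn. apply Dname_ext. intros x Hx. unfold T. rewrite nthc_pref by lia. reflexivity.
  - split; auto. intro m.
    assert (Hcl' : forall s t, T (code (s ++ t)) = true -> T (code s) = true).
    { intros s t H. unfold T in *. apply Nat.eqb_eq. apply Nat.eqb_eq in H.
      apply (proj2 Htree s t). exact H. }
    pose proof (D_sol T _ Hcl' (proj1 HHS) (lands_of_sol _ _ HHS Hin) m) as H.
    unfold T in H. apply Nat.eqb_eq in H. exact H.
Qed.

Lemma red_D_C : sW_le FindHS_Delta01 C_Baire.
Proof.
  exists hD2C, hID. split; [apply comp_hD2C|split; [apply comp_hID|]].
  intros G HG p [y [Hcl [HHS Hin]]].
  pose proof Hcl as [O1 [O2 Heq]].
  assert (Hav : avoids (in_open (pi2 p)) y).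
  { apply clopen_avoid; auto. apply HHS. apply lands_of_sol; auto. }
  set (q := fun i => if TP (pi2 p) i then 1 else 0).
  assert (Htree : is_tree_name q).
  { split.
    - intro s. unfold q. destruct (TP (pi2 p) (code s)); auto.
    - intros s t. unfold in_tree, q. destruct (TP (pi2 p) (code (s ++ t))) eqn:E; [|discriminate].
      rewrite (TP_prefix _ _ _ E). auto. }
  assert (Hq : C_Baire q y).
  { split; auto. intro n. unfold in_tree, q. rewrite (TP_avoid (pi2 p) y O2 (proj1 HHS) Hav n). reflexivity. }
  destruct (HG q (ex_intro _ _ Hq)) as [_ Hb].
  assert (HT : forall m, TP (pi2 p) (code (pref (G q) m)) = true).
  { intro m. specialize (Hb m). unfold in_tree, q in Hb. destruct (TP (pi2 p) _); auto. discriminate. }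
  destruct (TP_path _ _ HT) as [Hf Hav2].
  assert (Hl : lands (in_open (pi1 p)) (G q)) by (apply clopen_lands; auto).
  exists q, (G q). split; [|split; [apply computes_ID|]].
  - apply (computes_gen hD2C p _ (fun i => i + i + 1)
      (fun c i => if TP (fun k => nthc (k + k + 1) c) i then 1 else 0)).
    apply h_spec. reflexivity.
    intros n i Hn. unfold q. rewrite (TP_ext _ (pi2 p)). reflexivity.
    intros k Hk. pose proof (lenc_le i). rewrite nthc_pref by lia. unfold pi2. f_equal. lia.
  - split; auto. split. split; auto. apply (Hl (fun n => n) id_strinc).
Qed.

Lemma red_D_P : sW_le FindHS_Delta01 FindHS_Pi01.
Proof.
  exists hD2P, hID. split; [apply comp_hD2P|split; [apply comp_hID|]].
  intros G HG p [y [Hcl [HHS Hin]]].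
  pose proof Hcl as [O1 [O2 Heq]].
  assert (Hav : avoids (in_open (pi2 p)) y).
  { apply clopen_avoid; auto. apply HHS. apply lands_of_sol; auto. }
  assert (Hq : FindHS_Pi01 (pi2 p) y).
  { split; auto. split. split; auto. apply HHS. apply (Hav (fun n => n) id_strinc). }
  destruct (HG (pi2 p) (ex_intro _ _ Hq)) as [_ [[Hf [Hl|Hav2]] Hnot]].
  { exfalso. apply Hnot. apply (Hl (fun n => n) id_strinc). }
  assert (Hl : lands (in_open (pi1 p)) (G (pi2 p))) by (apply clopen_lands; auto).
  exists (pi2 p), (G (pi2 p)). split; [|split; [apply computes_ID|]].
  - apply (computes_gen hD2P p _ (fun i => i + i + 1) (fun c i => nthc (i + i + 1) c)).
    apply h_spec. reflexivity.
    intros n i Hn. rewrite nthc_pref by lia. unfold pi2. f_equal. lia.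
  - split; auto. split. split; auto. apply (Hl (fun n => n) id_strinc).
Qed.

Lemma red_P_D : sW_le FindHS_Pi01 FindHS_Delta01.
Proof.
  exists hP2D, hR. split; [apply comp_hP2D|split; [apply comp_hR|]].
  intros G HG p [y [Ho [[Hy Hly] Hnot]]].
  assert (Hav : avoids (in_open p) y).
  { destruct Hly as [Hl|Hav]; auto. exfalso. apply Hnot. apply (Hl (fun n => n) id_strinc). }
  set (T := TP p).
  assert (HTy := TP_avoid p y Ho Hy Hav).
  assert (Hq : FindHS_Delta01 (Dname T) (fun k => code (pref y k))).
  { split. apply D_clopen. apply D_path; auto. }
  destruct (HG (Dname T) (ex_intro _ _ Hq)) as [Hcl [HHS Hin]].
  pose proof (D_sol T _ (TP_prefix p) (proj1 HHS) (lands_of_sol _ _ HHS Hin)) as Hr.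
  destruct (TP_path _ _ Hr) as [Hrs Hrav].
  exists (Dname T), (fun n => nthc n (G (Dname T) (S n))).
  split; [|split; [apply computes_R|]].
  - apply (computes_gen hP2D p _ (fun i => P2 (half i))
      (fun c i => Dname (fun x => TP (fun k => nthc k c) x) i)).
    apply h_spec. reflexivity.
    intros n i Hn. apply Dname_ext. intros x Hx. unfold T. apply TP_ext.
    intros k Hk. pose proof (lenc_le x). rewrite nthc_pref by lia. reflexivity.
  - split; auto. split. split; auto. apply (Hrav (fun n => n) id_strinc).
Qed.

Theorem mainTheorem3 :
  sW_eq C_Baire FindHS_Delta01 /\ sW_eq FindHS_Delta01 FindHS_Pi01.
Proof.
  split; split.
  apply red_C_D. apply red_D_C. apply red_D_P. apply red_P_D.
Qed.
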